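(* Let $(X,d)$ be a totally bounded metric space, $\emptyset\ne F\subseteq X$ with a representation $(\tilde F_k)$, and let $G,H:\mathbb{R}_+\to\mathbb{R}_+$ satisfy properties (G) and (H). Let $(x_n)$ be a sequence in $X$ that is uniformly $(G,H)$-Fej\'er monotone w.r.t. $F$ and has approximate $F$-points. Then $(x_n)$ is Cauchy.
   Context: A representation of $F$: sets $\tilde F_k\subseteq X$ with $F=\bigcap_k\tilde F_k$; $AF_k:=\bigcap_{l\le k}\tilde F_l$. Property (G): $a_n\to0$ implies $G(a_n)\to0$ for all sequences $(a_n)$ in $\mathbb{R}_+$; property (H): $H(a_n)\to0$ implies $a_n\to0$. $(x_n)$ is uniformly $(G,H)$-Fej\'er monotone w.r.t. $F$ if for all $r,n,m\in\mathbb{N}$ there exists $k\in\mathbb{N}$ such that for all $p\in AF_k$ and all $l\le m$, $H(d(x_{n+l},p))<G(d(x_n,p))+\frac1{r+1}$. $(x_n)$ has approximate $F$-points if for every $k\in\mathbb{N}$ there is $N$ with $x_N\in AF_k$. *)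

(* Defs.v *)
From Stdlib Require Import Reals List.
Open Scope R_scope.

Definition is_metric {X : Type} (d : X -> X -> R) : Prop :=
  (forall x y, 0 <= d x y) /\
  (forall x y, d x y = 0 <-> x = y) /\
  (forall x y, d x y = d y x) /\
  (forall x y z, d x z <= d x y + d y z).

Definition totally_bounded {X : Type} (d : X -> X -> R) : Prop :=
  forall eps, 0 < eps ->
    exists l : list X, forall x, exists y, In y l /\ d x y < eps.

Definition representation {X : Type} (F : X -> Prop) (Ft : nat -> X -> Prop) : Prop :=
  forall x, F x <-> (forall k, Ft k x).

Definition AF {X : Type} (Ft : nat -> X -> Prop) (k : nat) (p : X) : Prop :=
  forall l, (l <= k)%nat -> Ft l p.

(* G, H : R_+ -> R_+ (represented as R -> R mapping [0,oo) into [0,oo)) *)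
Definition maps_nonneg (G : R -> R) : Prop := forall a, 0 <= a -> 0 <= G a.

Definition property_G (G : R -> R) : Prop :=
  forall a : nat -> R, (forall n, 0 <= a n) -> Un_cv a 0 -> Un_cv (fun n => G (a n)) 0.

Definition property_H (H : R -> R) : Prop :=
  forall a : nat -> R, (forall n, 0 <= a n) -> Un_cv (fun n => H (a n)) 0 -> Un_cv a 0.

Definition unif_GH_fejer {X : Type} (d : X -> X -> R) (G H : R -> R)
    (Ft : nat -> X -> Prop) (x : nat -> X) : Prop :=
  forall r n m : nat, exists k : nat, forall p, AF Ft k p ->
    forall l, (l <= m)%nat ->
      H (d (x (n + l)%nat) p) < G (d (x n) p) + / (INR r + 1).

Definition approx_F_points {X : Type} (Ft : nat -> X -> Prop) (x : nat -> X) : Prop :=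
  forall k, exists N, AF Ft k (x N).

Definition cauchy {X : Type} (d : X -> X -> R) (x : nat -> X) : Prop :=
  forall eps, 0 < eps -> exists N, forall m n, (N <= m)%nat -> (N <= n)%nat ->
    d (x m) (x n) < eps.

(* Main.v *)
Require Import Defs.
From Stdlib Require Import Reals List Lra Lia Classical ClassicalEpsilon.
Open Scope R_scope.

Lemma G_eps (G : R -> R) : property_G G ->
  forall dl, 0 < dl -> exists al, 0 < al /\ forall a, 0 <= a -> a < al -> G a < dl.
Proof.
  intros HG dl Hdl. apply NNPP; intro Hn.
  assert (Hs : forall n : nat, exists a, 0 <= a /\ a < / (INR n + 1) /\ dl <= G a).
  { intro n. apply NNPP; intro Hc. apply Hn. exists (/ (INR n + 1)). split.
    - apply Rinv_0_lt_compat. pose proof (pos_INR n); lra.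
    - intros a Ha Hal. apply Rnot_le_lt. intro Hg. apply Hc. exists a; auto. }
  pose (a := fun n => proj1_sig (constructive_indefinite_description _ (Hs n))).
  assert (Ha : forall n, 0 <= a n /\ a n < / (INR n + 1) /\ dl <= G (a n)).
  { intro n. unfold a. destruct (constructive_indefinite_description _ (Hs n)); auto. }
  assert (Hcv : Un_cv a 0).
  { intros e He. destruct (archimed (/ e)) as [Har _].
    exists (Z.to_nat (up (/ e))). intros n Hn'. unfold R_dist.
    destruct (Ha n) as [H0 [H1 _]]. rewrite Rminus_0_r, Rabs_right by lra.
    assert (INR (Z.to_nat (up (/e))) <= INR n) by (apply le_INR; lia).
    assert (IZR (up (/ e)) <= INR (Z.to_nat (up (/ e)))).
    { rewrite INR_IZR_INZ. apply IZR_le. lia. }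
    assert (0 < / e) by (apply Rinv_0_lt_compat; lra).
    assert (/ (INR n + 1) < e).
    { rewrite <- (Rinv_inv e). apply Rinv_lt_contravar.
      - apply Rmult_lt_0_compat; [lra|]. pose proof (pos_INR n); lra.
      - lra. }
    lra. }
  specialize (HG a (fun n => proj1 (Ha n)) Hcv dl Hdl) as [N HN].
  specialize (HN N (le_n N)). unfold R_dist in HN. rewrite Rminus_0_r in HN.
  destruct (Ha N) as [_ [_ H2]]. pose proof (Rle_abs (G (a N))). lra.
Qed.

Lemma H_eps (H : R -> R) : maps_nonneg H -> property_H H ->
  forall e, 0 < e -> exists dl, 0 < dl /\ forall a, 0 <= a -> H a < dl -> a < e.
Proof.
  intros Hnn HH e He. apply NNPP; intro Hn.
  assert (Hs : forall n : nat, exists a, 0 <= a /\ H a < / (INR n + 1) /\ e <= a).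
  { intro n. apply NNPP; intro Hc. apply Hn. exists (/ (INR n + 1)). split.
    - apply Rinv_0_lt_compat. pose proof (pos_INR n); lra.
    - intros a Ha Hal. apply Rnot_le_lt. intro Hg. apply Hc. exists a; auto. }
  pose (a := fun n => proj1_sig (constructive_indefinite_description _ (Hs n))).
  assert (Ha : forall n, 0 <= a n /\ H (a n) < / (INR n + 1) /\ e <= a n).
  { intro n. unfold a. destruct (constructive_indefinite_description _ (Hs n)); auto. }
  assert (Hcv : Un_cv (fun n => H (a n)) 0).
  { intros e' He'. destruct (archimed (/ e')) as [Har _].
    exists (Z.to_nat (up (/ e'))). intros n Hn'. unfold R_dist.
    destruct (Ha n) as [H0 [H1 _]]. pose proof (Hnn _ H0).
    rewrite Rminus_0_r, Rabs_right by lra.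
    assert (INR (Z.to_nat (up (/e'))) <= INR n) by (apply le_INR; lia).
    assert (IZR (up (/ e')) <= INR (Z.to_nat (up (/ e')))).
    { rewrite INR_IZR_INZ. apply IZR_le. lia. }
    assert (0 < / e') by (apply Rinv_0_lt_compat; lra).
    assert (/ (INR n + 1) < e').
    { rewrite <- (Rinv_inv e'). apply Rinv_lt_contravar.
      - apply Rmult_lt_0_compat; [lra|]. pose proof (pos_INR n); lra.
      - lra. }
    lra. }
  specialize (HH a (fun n => proj1 (Ha n)) Hcv e He) as [N HN].
  specialize (HN N (le_n N)). unfold R_dist in HN. rewrite Rminus_0_r in HN.
  destruct (Ha N) as [_ [_ H2]]. rewrite Rabs_right in HN; lra.
Qed.

Lemma list_bound {A : Type} (Q : A -> nat -> Prop) :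
  (forall y K K', (K <= K')%nat -> Q y K -> Q y K') ->
  forall L : list A, (forall y, In y L -> exists K, Q y K) ->
  exists K, forall y, In y L -> Q y K.
Proof.
  intros Hm L. induction L as [|a L IH]; intros Hall.
  - exists 0%nat. intros y [].
  - destruct (Hall a (or_introl eq_refl)) as [Ka HKa].
    destruct IH as [K HK]. { intros y Hy. apply Hall. right; auto. }
    exists (Nat.max Ka K). intros y [<-|Hy].
    + apply (Hm _ Ka); [lia|auto].
    + apply (Hm _ K); [lia|auto].
Qed.

Theorem corollary5p2 (X : Type) (d : X -> X -> R)
  (F : X -> Prop) (Ft : nat -> X -> Prop) (G H : R -> R) (x : nat -> X) :
  is_metric d -> totally_bounded d ->
  (exists p, F p) -> representation F Ft ->
  maps_nonneg G -> maps_nonneg H -> property_G G -> property_H H ->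
  unif_GH_fejer d G H Ft x -> approx_F_points Ft x ->
  cauchy d x.
Proof.
  intros [Hd0 [Hdeq [Hsym Htri]]] Htb _ _ HGnn HHnn HG HH Hfej Happ eps Heps.
  destruct (H_eps H HHnn HH (eps/4)) as [dl [Hdl HHd]]; [lra|].
  destruct (G_eps G HG (dl/2)) as [al [Hal HGa]]; [lra|].
  destruct (archimed (2 / dl)) as [Har _].
  set (r := Z.to_nat (up (2 / dl))).
  assert (Hr : / (INR r + 1) < dl / 2).
  { assert (IZR (up (2 / dl)) <= INR r).
    { unfold r. rewrite INR_IZR_INZ. apply IZR_le. lia. }
    assert (0 < 2 / dl) by (unfold Rdiv; apply Rmult_lt_0_compat; [lra|apply Rinv_0_lt_compat; lra]).
    replace (dl / 2) with (/ (2 / dl)) by (field; lra).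
    apply Rinv_lt_contravar; [apply Rmult_lt_0_compat; lra|lra]. }
  destruct (Htb (al/2)) as [L HL]; [lra|].
  set (near := fun y k => exists N, AF Ft k (x N) /\ d (x N) y < al/2).
  assert (Hpig : exists y, In y L /\ forall K, exists k, (K <= k)%nat /\ near y k).
  { apply NNPP; intro Hc.
    assert (Hb : forall y, In y L -> exists K, forall k, (K <= k)%nat -> ~ near y k).
    { intros y Hy. apply NNPP; intro Hc2. apply Hc. exists y. split; auto.
      intro K. apply NNPP; intro Hc3. apply Hc2. exists K. intros k Hk Hn.
      apply Hc3. exists k; auto. }
    destruct (list_bound (fun y K => forall k, (K <= k)%nat -> ~ near y k)) with (L := L)
      as [K HK].
    { intros y K K' HKK' HQ k Hk. apply HQ. lia. }
    { exact Hb. }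
    destruct (Happ K) as [N HN]. destruct (HL (x N)) as [y [Hy Hdy]].
    apply (HK y Hy K (le_n K)). exists N; auto. }
  destruct Hpig as [y [Hy Hnear]].
  destruct (Hnear 0%nat) as [k0 [_ [n0 [_ Hn0]]]].
  assert (Hmain : forall i, (n0 <= i)%nat -> d (x i) (x n0) < eps / 2).
  { intros i Hi. destruct (Hfej r n0 (i - n0)%nat) as [k Hk].
    destruct (Hnear k) as [k' [Hkk' [N [HAF HdN]]]].
    assert (HAFk : AF Ft k (x N)) by (intros l Hl; apply HAF; lia).
    assert (Hdp : d (x n0) (x N) < al).
    { pose proof (Htri (x n0) y (x N)). rewrite (Hsym y (x N)) in H0. lra. }
    assert (Hgl : G (d (x n0) (x N)) < dl / 2) by (apply HGa; auto).
    pose proof (Hk (x N) HAFk (i - n0)%nat (le_n _)) as H1.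
    pose proof (Hk (x N) HAFk 0%nat (Nat.le_0_l _)) as H2.
    replace (n0 + (i - n0))%nat with i in H1 by lia.
    replace (n0 + 0)%nat with n0 in H2 by lia.
    assert (d (x i) (x N) < eps/4) by (apply HHd; auto; lra).
    assert (d (x n0) (x N) < eps/4) by (apply HHd; auto; lra).
    pose proof (Htri (x i) (x N) (x n0)). rewrite (Hsym (x N) (x n0)) in H4. lra. }
  exists n0. intros m n Hm Hn.
  pose proof (Hmain m Hm). pose proof (Hmain n Hn).
  pose proof (Htri (x m) (x n0) (x n)). rewrite (Hsym (x n0) (x n)) in H2. lra.
Qed.
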